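(* For every $(t,h)\in[0,T)\times\mathbb{R}_+$, the map $z\mapsto\widehat J(t,z,h)$ is non-decreasing on $\mathbb{R}_+$.
   Context: Fix constants $T>0$, $r>0$, $\mu\in\mathbb{R}$, $\sigma>0$, $\rho>0$, $m^0\ge 0$, $m^1\ge 0$, $\kappa>0$, $\delta>0$, $\alpha\in(0,1)$, $I>0$ and a number $f(I)>0$. Write $\mathbb{R}_+=(0,\infty)$, $\mathcal{O}=[0,T]\times\mathbb{R}_+^2$, $\theta=(\mu-r)/\sigma$. Let $(\Omega,\mathcal{F},\mathbb{F},\mathbb{P})$ be a complete filtered probability space satisfying the usual conditions, carrying a standard $\mathbb{F}$-Brownian motion $B$. Let $\widehat u(z,h)=(1-\alpha)(z/\alpha)^{\alpha/(\alpha-1)}h$. For $(t,z,h)\in\mathcal{O}$ and $s\in[t,T]$ let $H^2_s=he^{-\delta(s-t)}+\frac{f(I)}{\delta}(1-e^{-\delta(s-t)})$, $M^{H^2}_s=m^0+m^1(H^2_s)^{-\kappa}$, and let $Z^2$ solve $dZ^2_s=(\rho-r+M^{H^2}_s)Z^2_s\,ds-\theta Z^2_s\,dB_s$, $Z^2_t=z$. Define $W(t,z,h)=\mathbb{E}\big[\int_t^T e^{-\int_t^s(\rho+M^{H^2}_u)du}\,\widehat u(Z^2_s,H^2_s)\,ds\big]$; subscripts denote partial derivatives. For $z,h>0$ and $s\ge0$ let $H^1_s=he^{-\delta s}$, $M^{H^1}_s=m^0+m^1(H^1_s)^{-\kappa}$ and $Z^1_s=z\exp\big(-(r+\tfrac12\theta^2)s-\theta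 B_s+\int_0^s(\rho+M^{H^1}_u)du\big)$, with $\mathbb{E}_{z,h}$ the corresponding expectation. For $(t,z,h)\in\mathcal{O}$, $\widehat J(t,z,h)=\sup_{0\le\tau\le T-t}\mathbb{E}_{z,h}\Big[\int_0^\tau\Big(Iz\,e^{-rs-\theta B_s-\frac12\theta^2 s}-e^{-\int_0^s(\rho+M^{H^1}_u)du}f(I)W_h(t+s,Z^1_s,H^1_s)\Big)ds\Big]$ over $\mathbb{F}$-stopping times with values in $[0,T-t]$. *)

(* Defs.v *)
From HB Require Import structures.
From mathcomp Require Import all_boot all_order all_algebra.
From mathcomp Require Import all_classical all_reals all_analysis.
Set Implicit Arguments. Unset Strict Implicit. Unset Printing Implicit Defensive.
Import Order.TTheory GRing.Theory Num.Theory.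
Import numFieldNormedType.Exports.
Local Open Scope classical_set_scope.
Local Open Scope ring_scope.

Section Model.
Context {R : realType} {d : measure_display} {Omega : measurableType d}.

Definition is_filtration (F : R -> set (set Omega)) :=
  (forall t, 0 <= t -> @sigma_algebra Omega setT (F t)) /\
  (forall t, 0 <= t -> F t `<=` measurable) /\
  (forall s t, 0 <= s -> s <= t -> F s `<=` F t).

Definition usual_conditions (P : probability Omega R) (F : R -> set (set Omega)) :=
  is_filtration F /\
  (forall N : set Omega, P.-negligible N -> measurable N) /\
  (forall N : set Omega, P.-negligible N -> F 0 N) /\
  (forall t, 0 <= t -> forall A, F t A <-> (forall s, t < s -> F s A)).

Definition is_F_brownian_motion (P : probability Omega R)
    (F : R -> set (set Omega)) (B : R -> Omega -> R) :=
  {ae P, forall w, B 0 w = 0} /\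
  {ae P, forall w, {within `[0, +oo[, continuous (fun t => B t w)}} /\
  (forall t, 0 <= t -> forall C : set R, measurable C -> F t (B t @^-1` C)) /\
  (forall s t, 0 <= s -> s < t -> forall C : set R, measurable C ->
     P ((fun w => B t w - B s w) @^-1` C) = normal_prob 0 (Num.sqrt (t - s)) C) /\
  (forall s t, 0 <= s -> s < t -> forall A, F s A -> forall C : set R, measurable C ->
     P (A `&` ((fun w => B t w - B s w) @^-1` C)) =
     (P A * P ((fun w => (B t w - B s w)%R) @^-1` C))%E).

Definition stopping_time_le (F : R -> set (set Omega)) (a : R) (tau : Omega -> R) :=
  (forall w, 0 <= tau w <= a) /\ (forall u, 0 <= u -> F u [set w | tau w <= u]).

Variables (P : probability Omega R) (B : R -> Omega -> R).
Variables (T r mu sigma rho m0 m1 kappa delta alpha I fI : R).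

Definition theta : R := (mu - r) / sigma.

Definition leb := (@lebesgue_measure R).

Definition dint (a b : R) (g : R -> R) : R := Rintegral leb `[a, b] g.

Definition uhat (z h : R) : R :=
  (1 - alpha) * powR (z / alpha) (alpha / (alpha - 1)) * h.

Definition Mfun (x : R) : R := m0 + m1 * powR x (- kappa).

Definition H2 (t h s : R) : R :=
  h * expR (- delta * (s - t)) + fI / delta * (1 - expR (- delta * (s - t))).

(* explicit (unique strong) solution of
   dZ = (rho - r + M^{H2}) Z ds - theta Z dB,  Z_t = z *)
Definition Z2 (t z h s : R) (w : Omega) : R :=
  z * expR (dint t s (fun u => rho - r + Mfun (H2 t h u))
            - theta * (B s w - B t w) - theta ^+ 2 / 2 * (s - t)).

Definition W (t z h : R) : R :=
  fine (integral P setT (fun w =>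
    integral leb `[t, T] (fun s =>
      (expR (- dint t s (fun u => rho + Mfun (H2 t h u))) *
       uhat (Z2 t z h s w) (H2 t h s))%:E))).

Definition W_h (t z h : R) : R := derive1 (fun h' => W t z h') h.

Definition H1 (h s : R) : R := h * expR (- delta * s).

Definition Z1 (z h s : R) (w : Omega) : R :=
  z * expR (- (r + theta ^+ 2 / 2) * s - theta * B s w
            + dint 0 s (fun u => rho + Mfun (H1 h u))).

Definition J_integrand (t z h s : R) (w : Omega) : R :=
  I * z * expR (- r * s - theta * B s w - theta ^+ 2 / 2 * s)
  - expR (- dint 0 s (fun u => rho + Mfun (H1 h u))) * fI
    * W_h (t + s) (Z1 z h s w) (H1 h s).

Definition Jhat (F : R -> set (set Omega)) (t z h : R) : \bar R :=
  ereal_sup [set v | exists tau, stopping_time_le F (T - t) tau /\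
     v = integral P setT (fun w =>
           integral leb `[0, tau w] (fun s => (J_integrand t z h s w)%:E))].

End Model.

(* Main.v *)
Require Import Defs.
From HB Require Import structures.
From mathcomp Require Import all_boot all_order all_algebra.
From mathcomp Require Import all_classical all_reals all_analysis.
From mathcomp Require Import ring lra.
Import Order.TTheory GRing.Theory Num.Theory.
Import numFieldNormedType.Exports.
Local Open Scope classical_set_scope.
Local Open Scope ring_scope.
Import HBNNSimple.
Lemma int_mono d (T : measurableType d) (R : realType) (mu : {measure set T -> \bar R})
  (D : set T) (f g : T -> \bar R) :
  (forall x, D x -> f x <= g x)%E ->
  (\int[mu]_(x in D) f x <= \int[mu]_(x in D) g x)%E.
Proof.
move=> fg.
have fg' : {in D, forall x, (f x <= g x)%E} by move=> x; rewrite inE; exact: fg.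
rewrite (integralE _ _ f) (integralE _ _ g); apply: leeB.
- rewrite !ge0_integralE; [|by move=> x _; exact: funepos_ge0..].
  apply: le_ereal_sup => _ [h /= hf <-]; exists h => //= x.
  apply: (le_trans (hf x)); rewrite /patch; case: ifPn => // Dx.
  exact: (funepos_le fg').
- rewrite !ge0_integralE; [|by move=> x _; exact: funeneg_ge0..].
  apply: le_ereal_sup => _ [h /= hf <-]; exists h => //= x.
  apply: (le_trans (hf x)); rewrite /patch; case: ifPn => // Dx.
  exact: (funeneg_le fg').
Qed.

Lemma ge0_int_scale d (T : measurableType d) (R : realType) (mu : {measure set T -> \bar R})
  (D : set T) (F : T -> \bar R) (c : R) : 0 < c ->
  (forall x, D x -> 0 <= F x)%E ->
  (\int[mu]_(x in D) (c%:E * F x) = c%:E * \int[mu]_(x in D) F x)%E.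
Proof.
move=> c0 F0.
rewrite ge0_integralE; last by move=> x Dx; rewrite mule_ge0 ?F0// lee_fin ltW.
rewrite ge0_integralE// -ereal_sup_pZl//; congr ereal_sup.
rewrite erestrict_scale; apply/seteqP; split => y.
- move=> [h /= hf <-].
  have ci0 : 0 <= c^-1 by rewrite invr_ge0 ltW.
  exists (sintegral mu (scale_nnsfun h ci0)).
    exists (scale_nnsfun h ci0) => //= x.
    by rewrite /= EFinM lee_pdivrMl.
  rewrite (_ : scale_nnsfun h ci0 = cst c^-1 \* h :> (T -> R))//.
  by rewrite sintegralrM muleA -EFinM divff ?gt_eqF// mul1e.
- move=> [_ [h /= hf <-] <-].
  exists (scale_nnsfun h (ltW c0)).
    by move=> x /=; rewrite EFinM lee_pmul2l.
  by rewrite (_ : scale_nnsfun h (ltW c0) = cst c \* h :> (T -> R))// sintegralrM.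
Qed.

Lemma int_scale d (T : measurableType d) (R : realType) (mu : {measure set T -> \bar R})
  (D : set T) (F : T -> \bar R) (c : R) : 0 < c ->
  (\int[mu]_(x in D) (c%:E * F x) = c%:E * \int[mu]_(x in D) F x)%E.
Proof.
move=> c0; rewrite integralE [in RHS]integralE.
rewrite ge0_funeposM ?ltW// ge0_funenegM ?ltW//.
rewrite !ge0_int_scale//; try by move=> x _; first [exact: funeneg_ge0|exact: funepos_ge0].
have A0 : (0 <= \int[mu]_(x in D) F^\+ x)%E by apply: integral_ge0 => x _; exact: funepos_ge0.
have B0 : (0 <= \int[mu]_(x in D) F^\- x)%E by apply: integral_ge0 => x _; exact: funeneg_ge0.
move: A0 B0; set A := integral _ _ _; set B := integral _ _ _.
case: A => [a| |] //; case: B => [b| |] //= a0 b0.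
- by rewrite -!EFinM -EFinD mulrDr mulrN.
- by rewrite gt0_muley ?lte_fin// mulrNy gtr0_sg// mul1e /= addeNy.
- by rewrite /= gt0_muley ?lte_fin.
- by rewrite gt0_muley ?lte_fin//= mulrNy gtr0_sg// mul1e.
Qed.

Lemma quot_lim_ge0 (R : realType) (X : R -> \bar R) (h0 l : R) :
  0 < h0 -> (forall x : R, 0 < x -> (0 <= X x)%E) ->
  (forall x y : R, 0 < x -> x <= y -> (X x <= X y)%E) ->
  (fun e => e^-1 *: (fine (X (e + h0)) - fine (X h0))) @ 0^' --> l -> 0 <= l.
Proof.
move=> h00 X0 Xnd cv; rewrite leNgt; apply/negP => l0.
set q := fun e => _ in cv.
have ex : forall B, 0 < B -> exists e, [/\ 0 < e, e < B & 3 * l / 2 < q e < l / 2].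
  move=> B B0.
  have H : \forall t \near 0^'+, `|l - q t| < - l / 2.
    move: (cvg_dnbhs_at_right cv) => /cvgrPdist_lt; apply.
    by rewrite divr_gt0// oppr_gt0.
  have H2 := nbhs_right_gt (0:R).
  have H3 := nbhs_right_lt B0.
  have [e [He1 [He2 He3]]] := filter_ex (filterI H (filterI H2 H3)).
  exists e; split => //.
  move: He1; rewrite ltr_norml => /andP[a b].
  apply/andP; split; lra.
have X0h := X0 _ h00.
have Xeh : forall e : R, 0 < e -> (0 <= X (e + h0)%R)%E by move=> e e0; apply: X0; lra.
have Xnde : forall e : R, 0 < e -> (X h0 <= X (e + h0)%R)%E by move=> e e0; apply: Xnd; lra.
have qE : forall e, q e = e^-1 * (fine (X (e + h0)) - fine (X h0)) by [].
move: X0h Xnde Xeh; case EX: (X h0) => [x0| |] // x00 Xnde Xeh.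
- pose B := if 0 < x0 then 2 * x0 / (- 3 * l) else 1.
  have B0 : 0 < B.
    rewrite /B; case: ifPn => // x0p; rewrite divr_gt0 //; lra.
  have [e [e0 eB /andP[qe1 qe2]]] := ex B B0.
  rewrite qE EX /= in qe1 qe2.
  have ee : e * e^-1 = 1 by rewrite divff // gt_eqF.
  move: (Xnde e e0) (Xeh e e0) qe1 qe2.
  case: (X (e + h0)) => [x1| |] //=.
  + rewrite !lee_fin => x01 _ _ qe2.
    have : 0 <= e^-1 * (x1 - x0) by apply: mulr_ge0; [rewrite invr_ge0 ltW|rewrite subr_ge0].
    lra.
  + move=> _ _ qe1 qe2.
    move: eB; rewrite /B; case: ifPn => x0p eB.
    * have : e * (- 3 * l) < 2 * x0 by rewrite -ltr_pdivlMr //; lra.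
      nra.
    * have x0z : x0 = 0 by apply/eqP; rewrite eq_le; rewrite lee_fin in x00; rewrite x00 andbT leNgt.
      move: qe2; rewrite x0z; lra.
- have [e [e0 _ /andP[_ qe2]]] := ex 1 ltr01.
  rewrite qE EX /= in qe2.
  have f0 : 0 <= fine (X (e + h0)) by apply: fine_ge0; exact: Xeh.
  have : 0 <= e^-1 * (fine (X (e + h0)) - 0) by apply: mulr_ge0; [rewrite invr_ge0 ltW|rewrite subr0].
  lra.
Qed.

Lemma deriv_scale_le (R : realType) (g : R -> R) (c1 c2 h : R) : 0 < c2 -> c2 <= c1 ->
  (forall l, (fun e => e^-1 *: (g (e + h) - g h)) @ 0^' --> l -> 0 <= l) ->
  derive1 (fun x => c2 * g x) h <= derive1 (fun x => c1 * g x) h.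
Proof.
move=> c20 c21 qge0.
have c10 : 0 < c1 by apply: lt_le_trans c21.
set q := fun e => _ in qge0.
have qc : forall c, (fun e : R => e^-1 *: (c * g (e + h) - c * g h)) = (fun e => c * q e).
  by move=> c; apply/funext => e; rewrite /q /= -mulrBr; rewrite /GRing.scale /=; ring.
rewrite /derive1 !qc.
have [[l ql]|ncv] := pselect (exists l : R, q x @[x --> (0:R)^'] --> l).
- have l0 := qge0 _ ql.
  have cl : forall c, lim ((fun e => c * q e) @ 0^') = c * l.
    move=> c; apply: (cvg_lim (@Rhausdorff R)); apply: cvgM; [exact: cvg_cst|exact: ql].
  by rewrite !cl ler_wpM2r.
- have ncv' : forall c, 0 < c -> lim ((fun e => c * q e) @ 0^') = point.
    move=> c c0; rewrite /lim /lim_in; apply: xgetPN => m cm; apply: ncv.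
    exists (c^-1 * m).
    have : (fun e => c^-1 * (c * q e)) @ 0^' --> c^-1 * m by apply: cvgM; [exact: cvg_cst|exact: cm].
    by rewrite (_ : (fun e => c^-1 * (c * q e)) = q) //; apply/funext => e; rewrite mulrA mulVf ?gt_eqF // mul1r.
  by rewrite !ncv'.
Qed.

Lemma powR_anti_neg (R : realType) (q x y : R) : q < 0 -> 0 < x -> x <= y -> powR y q <= powR x q.
Proof.
move=> q0 x0 xy.
have y0 : 0 < y by apply: lt_le_trans xy.
have qE : q = - (- q) by rewrite opprK.
rewrite qE (powRN x) (powRN y) lef_pV2 ?posrE ?powR_gt0 //.
by apply: ge0_ler_powR => //; rewrite ?nnegrE ?oppr_ge0 ?ltW.
Qed.

Lemma expR_le1 (R : realType) (x : R) : x <= 0 -> expR x <= 1.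
Proof. by move=> x0; rewrite -expR0 ler_expR. Qed.

Section M.
Context {R : realType}.
Variables (m0 m1 kappa delta fI : R).
Hypotheses (m10 : 0 <= m1) (k0 : 0 < kappa) (d0 : 0 < delta) (fI0 : 0 < fI).

Lemma Mfun_anti x y : 0 < x -> x <= y -> Mfun m0 m1 kappa y <= Mfun m0 m1 kappa x.
Proof.
move=> x0 xy; rewrite /Mfun lerD2l ler_wpM2l //; apply: powR_anti_neg => //.
by rewrite oppr_lt0.
Qed.

Lemma Mfun_lb x : m0 <= Mfun m0 m1 kappa x.
Proof. by rewrite /Mfun lerDl mulr_ge0 // powR_ge0. Qed.

Lemma H2_lb t h u s : 0 < h -> t <= u <= s -> h * expR (- delta * (s - t)) <= H2 delta fI t h u.
Proof.
move=> h0 /andP[tu us]; rewrite /H2.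
have e1 : expR (- delta * (u - t)) <= 1 by apply: expR_le1; rewrite mulNr oppr_le0; apply: mulr_ge0; [exact: ltW|rewrite subr_ge0].
have e2 : expR (- delta * (s - t)) <= expR (- delta * (u - t)) by rewrite ler_expR; rewrite !mulNr lerN2; apply: ler_wpM2l; [exact: ltW|lra].
have : 0 <= fI / delta * (1 - expR (- delta * (u - t))).
  by apply: mulr_ge0; [rewrite divr_ge0 // ltW|rewrite subr_ge0].
nra.
Qed.

Lemma H2_pos t h u : 0 < h -> t <= u -> 0 < H2 delta fI t h u.
Proof.
move=> h0 tu; have := @H2_lb t h u u h0; rewrite tu lexx => /(_ isT) H; apply: lt_le_trans H.
by rewrite mulr_gt0 // expR_gt0.
Qed.

Lemma H2_mono t h1 h2 u : h1 <= h2 -> H2 delta fI t h1 u <= H2 delta fI t h2 u.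
Proof. by move=> h12; rewrite /H2 lerD2r ler_wpM2r // ltW // expR_gt0. Qed.

End M.

Lemma dint_mono (R : realType) (t s a b : R) (g1 g2 : R -> R) :
  (forall u, t <= u <= s -> [/\ a <= g1 u, g1 u <= g2 u & g2 u <= b]) ->
  dint t s g1 <= dint t s g2.
Proof.
move=> H; rewrite /dint /Rintegral.
have mD : measurable (`[t, s]%classic : set R) by exact: measurable_itv.
have I12 : (\int[leb]_(x in `[t, s]) (g1 x)%:E <= \int[leb]_(x in `[t, s]) (g2 x)%:E)%E.
  by apply: int_mono => u /= Hu; rewrite lee_fin; have [] := H u Hu.
have Ia : (\int[leb]_(x in `[t, s]) (cst a%:E) x <= \int[leb]_(x in `[t, s]) (g1 x)%:E)%E.
  by apply: int_mono => u /= Hu; rewrite lee_fin; have [] := H u Hu.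
have Ib : (\int[leb]_(x in `[t, s]) (g2 x)%:E <= \int[leb]_(x in `[t, s]) (cst b%:E) x)%E.
  by apply: int_mono => u /= Hu; rewrite lee_fin; have [] := H u Hu.
rewrite !integral_cst // in Ia Ib.
move: Ia Ib; set L := (X in (a%:E * X)%E) => Ia Ib.
have LF : (L \is a fin_num)%E.
  have E := lebesgue_measure_itv `[t, s].
  suff : (@lebesgue_measure R `[t, s]%classic \is a fin_num)%E by [].
  by rewrite E; case: ifP.
have lo : (-oo < a%:E * L)%E by rewrite -(fineK LF) -EFinM ltNyr.
have hi : (b%:E * L < +oo)%E by rewrite -(fineK LF) -EFinM ltry.
apply: fine_le; last exact: I12.
- rewrite fin_numElt; apply/andP; split.
  + exact: (lt_le_trans lo Ia).
  + exact: (le_lt_trans I12 (le_lt_trans Ib hi)).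
- rewrite fin_numElt; apply/andP; split.
  + exact: (lt_le_trans lo (le_trans Ia I12)).
  + exact: (le_lt_trans Ib hi).
Qed.

Lemma eqle_ (R : realType) (x y : R) : x = y -> x <= y.
Proof. by move=> ->. Qed.

Section Model2.
Context {R : realType} {d : measure_display} {Omega : measurableType d}.
Variables (P : probability Omega R) (B : R -> Omega -> R).
Variables (T r mu sigma rho m0 m1 kappa delta alpha I fI : R).
Hypotheses (m10 : 0 <= m1) (k0 : 0 < kappa) (d0 : 0 < delta) (a0 : 0 < alpha)
  (a1 : alpha < 1) (fI0 : 0 < fI) (I0 : 0 < I).

Let p := alpha / (alpha - 1).
Let p0 : p < 0.
Proof. by rewrite /p pmulr_rlt0 // invr_lt0 subr_lt0. Qed.

Lemma Z2_scale t y h s w :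
  Z2 B r mu sigma rho m0 m1 kappa delta fI t y h s w =
  y * Z2 B r mu sigma rho m0 m1 kappa delta fI t 1 h s w.
Proof. by rewrite /Z2 mul1r. Qed.

Lemma Z2_pos t y h s w : 0 < y -> 0 < Z2 B r mu sigma rho m0 m1 kappa delta fI t y h s w.
Proof. by move=> y0; rewrite /Z2 mulr_gt0 // expR_gt0. Qed.

Lemma uhat_scale y Z H : 0 < y -> 0 <= Z -> uhat alpha (y * Z) H = powR y p * uhat alpha Z H.
Proof.
move=> y0 Z0; rewrite /uhat (_ : y * Z / alpha = y * (Z / alpha)); last by rewrite mulrA.
rewrite (powRM _ (ltW y0)); last by rewrite divr_ge0 // ltW.
rewrite /p; ring.
Qed.

Definition wint (t y h s : R) (w : Omega) : R :=
  expR (- dint t s (fun u => rho + Mfun m0 m1 kappa (H2 delta fI t h u))) *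
  uhat alpha (Z2 B r mu sigma rho m0 m1 kappa delta fI t y h s w) (H2 delta fI t h s).

Lemma W_scale t y h : 0 < y ->
  W P B T r mu sigma rho m0 m1 kappa delta alpha fI t y h =
  powR y p * W P B T r mu sigma rho m0 m1 kappa delta alpha fI t 1 h.
Proof.
move=> y0.
change (fine (integral P setT (fun w => integral leb `[t, T] (fun s => (wint t y h s w)%:E))) =
  powR y p * fine (integral P setT (fun w => integral leb `[t, T] (fun s => (wint t 1 h s w)%:E)))).
have EE : (fun w => integral leb `[t, T] (fun s => (wint t y h s w)%:E)) =
  (fun w => (powR y p)%:E * integral leb `[t, T] (fun s => (wint t 1 h s w)%:E))%E.
  apply/funext => w; rewrite -int_scale ?powR_gt0 //; apply: eq_integral => s _.
  by rewrite -EFinM /wint Z2_scale uhat_scale ?ltW ?Z2_pos //; congr EFin; ring.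
transitivity (fine (integral P setT (fun w => (powR y p)%:E * integral leb `[t, T] (fun s => (wint t 1 h s w)%:E)))%E).
  exact: (congr1 (fun F => fine (integral P setT F)) EE).
rewrite int_scale ?powR_gt0 //.
set X := integral _ _ _.
case: X => [x| |] /=.
- by [].
- by rewrite gt0_muley ?lte_fin ?powR_gt0 //= mulr0.
- by rewrite mulrNy gtr0_sg ?powR_gt0 // mul1e /= mulr0.
Qed.


Lemma wint_ge0 t y h s w : 0 < y -> 0 < h -> t <= s -> 0 <= wint t y h s w.
Proof.
move=> y0 h0 ts; rewrite /wint mulr_ge0 ?expR_ge0 // /uhat.
by rewrite !mulr_ge0 ?powR_ge0 ?subr_ge0 ?ltW // H2_pos.
Qed.

Lemma wint_mono t y h1 h2 s w : 0 < y -> 0 < h1 -> h1 <= h2 -> t <= s ->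
  wint t y h1 s w <= wint t y h2 s w.
Proof.
move=> y0 h10 h12 ts.
have h20 : 0 < h2 by apply: lt_le_trans h12.
pose m := h1 * expR (- delta * (s - t)).
have m0' : 0 < m by rewrite mulr_gt0 // expR_gt0.
have Hu : forall u, t <= u <= s -> [/\ 0 < H2 delta fI t h1 u,
    H2 delta fI t h1 u <= H2 delta fI t h2 u & m <= H2 delta fI t h1 u].
  move=> u /andP[tu us]; split.
  - exact: H2_pos.
  - exact: H2_mono.
  - by apply: H2_lb => //; rewrite tu us.
have Mb : forall K, dint t s (fun u => K + Mfun m0 m1 kappa (H2 delta fI t h2 u)) <=
                    dint t s (fun u => K + Mfun m0 m1 kappa (H2 delta fI t h1 u)).
  move=> K; apply: (@dint_mono _ _ _ (K + m0) (K + Mfun m0 m1 kappa m)) => u Hu'.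
  have [Hp H12 Hm] := Hu u Hu'.
  split; rewrite lerD2l.
  - exact: Mfun_lb.
  - exact: Mfun_anti.
  - exact: Mfun_anti.
have E12 : expR (- dint t s (fun u => rho + Mfun m0 m1 kappa (H2 delta fI t h1 u))) <=
           expR (- dint t s (fun u => rho + Mfun m0 m1 kappa (H2 delta fI t h2 u))).
  by rewrite ler_expR lerN2; exact: Mb.
have Z21 : Z2 B r mu sigma rho m0 m1 kappa delta fI t y h2 s w <=
           Z2 B r mu sigma rho m0 m1 kappa delta fI t y h1 s w.
  rewrite /Z2; apply: ler_wpM2l; first exact: ltW.
  rewrite ler_expR; apply: lerB; last exact: lexx.
  by apply: lerB; [exact: Mb|exact: lexx].
have tss : t <= s <= s by rewrite ts lexx.
have [Hp1 H12 _] := Hu s tss.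
rewrite /wint.
have a1' : 0 <= 1 - alpha by rewrite subr_ge0; exact: ltW.
apply: ler_pM.
- exact: expR_ge0.
- rewrite /uhat; apply: mulr_ge0; last exact: ltW.
  by apply: mulr_ge0; [exact: a1'|exact: powR_ge0].
- exact: E12.
rewrite /uhat; apply: ler_pM.
- by apply: mulr_ge0; [exact: a1'|exact: powR_ge0].
- exact: ltW.
- apply: ler_wpM2l; first exact: a1'.
  apply: powR_anti_neg; first exact: p0.
  + by apply: divr_gt0; [exact: Z2_pos|exact: a0].
  + by apply: ler_wpM2r; [rewrite invr_ge0; exact: ltW|exact: Z21].
- exact: H12.
Qed.

Lemma W_h_le t y1 y2 h : 0 < y1 -> y1 <= y2 -> 0 < h ->
  W_h P B T r mu sigma rho m0 m1 kappa delta alpha fI t y2 h <=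
  W_h P B T r mu sigma rho m0 m1 kappa delta alpha fI t y1 h.
Proof.
move=> y10 y12 h0.
have y20 : 0 < y2 by apply: lt_le_trans y12.
rewrite /W_h.
have E : forall y, 0 < y -> (fun h' => W P B T r mu sigma rho m0 m1 kappa delta alpha fI t y h') =
   (fun h' => powR y p * W P B T r mu sigma rho m0 m1 kappa delta alpha fI t 1 h').
  by move=> y yp; apply/funext => h'; exact: W_scale.
apply: (le_trans (y := derive1 (fun x => powR y2 p * W P B T r mu sigma rho m0 m1 kappa delta alpha fI t 1 x) h)).
  by apply: eqle_; exact: (congr1 (fun f => derive1 f h) (E y2 y20)).
apply: (le_trans _ (y := derive1 (fun x => powR y1 p * W P B T r mu sigma rho m0 m1 kappa delta alpha fI t 1 x) h)); last first.
  by apply: eqle_; exact: (congr1 (fun f => derive1 f h) (esym (E y1 y10))).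
apply: deriv_scale_le.
- exact: powR_gt0.
- exact: powR_anti_neg.
move=> l; apply: (@quot_lim_ge0 _ (fun h' => integral P setT (fun w =>
   integral leb `[t, T] (fun s => (wint t 1 h' s w)%:E)))) => //.
- move=> x x0; apply: integral_ge0 => w _; apply: integral_ge0 => s.
  by rewrite /= in_itv /= => /andP[ts _]; rewrite lee_fin wint_ge0.
- move=> x x' x0 xx'; apply: int_mono => w _; apply: int_mono => s.
  by rewrite /= in_itv /= => /andP[ts _]; rewrite lee_fin wint_mono.
Qed.

Lemma J_mono t z1 z2 h s w : 0 < z1 -> z1 <= z2 -> 0 < h ->
  J_integrand P B T r mu sigma rho m0 m1 kappa delta alpha I fI t z1 h s w <=
  J_integrand P B T r mu sigma rho m0 m1 kappa delta alpha I fI t z2 h s w.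
Proof.
move=> z10 z12 h0; rewrite /J_integrand.
apply: lerB.
- by rewrite ler_wpM2r ?expR_ge0 // ler_wpM2l // ltW.
- apply: ler_wpM2l; first by rewrite mulr_ge0 ?expR_ge0 // ltW.
  apply: W_h_le.
  + by rewrite /Z1 mulr_gt0 // expR_gt0.
  + by rewrite /Z1 ler_wpM2r // expR_ge0.
  + by rewrite /H1 mulr_gt0 // expR_gt0.
Qed.

End Model2.

Theorem proposition4p2 (R : realType) (d : measure_display) (Omega : measurableType d)
  (P : probability Omega R) (F : R -> set (set Omega)) (B : R -> Omega -> R)
  (T r mu sigma rho m0 m1 kappa delta alpha I fI : R) :
  0 < T -> 0 < r -> 0 < sigma -> 0 < rho -> 0 <= m0 -> 0 <= m1 -> 0 < kappa ->
  0 < delta -> 0 < alpha < 1 -> 0 < I -> 0 < fI ->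
  usual_conditions P F -> is_F_brownian_motion P F B ->
  forall t h, 0 <= t < T -> 0 < h ->
  forall z1 z2, 0 < z1 -> z1 <= z2 ->
  (Jhat P B T r mu sigma rho m0 m1 kappa delta alpha I fI F t z1 h <=
   Jhat P B T r mu sigma rho m0 m1 kappa delta alpha I fI F t z2 h)%E.
Proof.
move=> T0 r0 s0 rho0 m00 m10 k0 d0 /andP[a0 a1] I0 fI0 _ _ t h _ h0 z1 z2 z10 z12.
rewrite /Jhat; apply: ge_ereal_sup => _ [tau [st ->]].
apply: le_ereal_sup_tmp.
exists (integral P setT (fun w => integral leb `[0, tau w] (fun s =>
  (J_integrand P B T r mu sigma rho m0 m1 kappa delta alpha I fI t z2 h s w)%:E))).
  by exists tau.
apply: int_mono => w _; apply: int_mono => s _.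
by rewrite lee_fin; apply: J_mono.
Qed.
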